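(* Let $d\ge 1$, let $\mathcal{S}$ be a nonempty finite index set, and let $\hat u_m\in\{-1,1\}^d$ for each $m\in\mathcal{S}$. Then for every coordinate $i\in[d]$, the signs of the outputs in coordinate $i$ of the following aggregation rules all coincide: the mean rule $\mathrm{Agg}_{\mathrm{avg}}$, the coordinate-wise $k$-trimmed-mean rule $\mathrm{Agg}_{\mathrm{trimmed},k}$ for any integer $0\le k<|\mathcal{S}|/2$, the coordinate-wise median rule $\mathrm{Agg}_{\mathrm{median}}$, and the coordinate-wise majority vote rule $\mathrm{Agg}_{\mathrm{maj}}$.
   Context: Let $\hat u_{mi}$ denote the $i$-th coordinate of $\hat u_m$, and $\mathrm{sign}:\mathbb{R}\to\{-1,0,1\}$ the usual sign function (with $\mathrm{sign}(0)=0$). The rules are defined as follows. (A.1) Mean: $\mathrm{Agg}_{\mathrm{avg}}(\{\hat u_m\}_{m\in\mathcal{S}})=\frac{1}{|\mathcal{S}|}\sum_{m\in\mathcal{S}}\hat u_m$. (A.2) Coordinate-wise $k$-trimmed mean ($k\in\mathbb{N}$): for each coordinate $i$, sort $\{\hat u_{mi}: m\in\mathcal{S}\}$ in increasing order, remove the top $k$ and bottom $k$ values, and let $\mathcal{R}_i$ be the set of remaining clients; if $\mathcal{R}_i=\emptyset$ the output in coordinate $i$ is $1$ or $-1$ uniformly at random, otherwise it is $\frac{1}{|\mathcal{R}_i|}\sum_{m\in\mathcal{R}_i}\hat u_{mi}$. (A.3) Coordinate-wise median: for each coordinate $i$, sort $\{\hat u_{mi}: m\in\mathcal{S}\}$ increasingly;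 if $|\mathcal{S}|$ is even, output the average of the elements of ranks $|\mathcal{S}|/2$ and $|\mathcal{S}|/2+1$; otherwise output the element of rank $\lceil|\mathcal{S}|/2\rceil$. (A.4) Coordinate-wise majority vote: in coordinate $i$ output $1$ if there are more $1$'s than $-1$'s among $\{\hat u_{mi}:m\in\mathcal{S}\}$, output $-1$ if there are more $-1$'s than $1$'s, and output $0$ otherwise. *)

(* Defs.v *)
From HB Require Import structures.
From mathcomp Require Import all_boot all_order all_algebra.
Set Implicit Arguments. Unset Strict Implicit. Unset Printing Implicit Defensive.
Import Order.TTheory GRing.Theory Num.Theory.
Local Open Scope ring_scope.

(* Clients indexed by a finite type S; client m sends u m : 'I_d -> R. *)

Definition coord_vals (R : realFieldType) (S : finType) (d : nat)
  (u : S -> 'I_d -> R) (i : 'I_d) : seq R := [seq u m i | m <- enum S].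

Definition sorted_vals (R : realFieldType) (S : finType) (d : nat)
  (u : S -> 'I_d -> R) (i : 'I_d) : seq R := sort <=%R (coord_vals u i).

Definition agg_avg (R : realFieldType) (S : finType) (d : nat)
  (u : S -> 'I_d -> R) (i : 'I_d) : R :=
  (#|S|%:R)^-1 * \sum_(m : S) u m i.

(* (A.2) k-trimmed mean: drop the k smallest and k largest values and average
   the rest.  The empty case (random +-1) never occurs under 2k < |S|; it is
   set to 1 here. *)
Definition agg_trimmed (R : realFieldType) (S : finType) (d : nat) (k : nat)
  (u : S -> 'I_d -> R) (i : 'I_d) : R :=
  let r := take (#|S| - 2 * k) (drop k (sorted_vals u i)) in
  if size r == 0%N then 1 else (size r)%:R^-1 * \sum_(x <- r) x.

(* (A.3) median; ranks are 1-based, so rank j is index j.-1 *)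
Definition agg_median (R : realFieldType) (S : finType) (d : nat)
  (u : S -> 'I_d -> R) (i : 'I_d) : R :=
  let s := sorted_vals u i in
  let n := #|S| in
  if ~~ odd n then (nth 0 s (n %/ 2).-1 + nth 0 s (n %/ 2)) / 2
  else nth 0 s (uphalf n).-1.

Definition agg_maj (R : realFieldType) (S : finType) (d : nat)
  (u : S -> 'I_d -> R) (i : 'I_d) : R :=
  let p := #|[set m | u m i == 1]| in
  let q := #|[set m | u m i == -1]| in
  if (q < p)%N then 1 else if (p < q)%N then -1 else 0.

(* Main.v *)
Require Import Defs.
Set Warnings "-all".
From mathcomp Require Import all_boot all_order all_algebra zify ring lra.
Import Order.TTheory GRing.Theory Num.Theory.
Local Open Scope ring_scope.

Lemma perm_pm (R : realFieldType) (s : seq R) :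
  all (fun x => (x == 1) || (x == -1)) s ->
  perm_eq s (nseq (count_mem (-1) s) (-1) ++ nseq (count_mem 1 s) 1).
Proof.
have n1 : (1 : R) != -1 by apply/negbT/gt_eqF; lra.
elim: s => //= x s IH /andP[hx /IH {}IH].
case/orP: hx => /eqP ->.
- have n2 : ((-1 : R) == 1) = false by rewrite eq_sym (negbTE n1).
  rewrite eqxx (negbTE n1) add0n add1n /=.
  apply: (@perm_trans _ ([:: 1] ++ nseq (count_mem (-1) s) (-1) ++ nseq (count_mem 1 s) 1)). 2: by rewrite perm_catCA.
  by rewrite /= perm_cons.
- have n2 : ((-1 : R) == 1) = false by rewrite eq_sym (negbTE n1).
  by rewrite eqxx n2 add0n add1n /= perm_cons.
Qed.

Lemma pairwise_nseq (T : Type) (r : rel T) n a : r a a -> pairwise r (nseq n a).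
Proof. by move=> h; elim: n => //= n ->; rewrite all_nseq h orbT. Qed.

Lemma sorted_pm (R : realFieldType) q p :
  sorted <=%R (nseq q (-1 : R) ++ nseq p 1).
Proof.
rewrite le_sorted_pairwise pairwise_cat !pairwise_nseq // andbT.
rewrite andbT; apply/allrelP => x y /nseqP[-> _] /nseqP[-> _]; lra.
Qed.

Lemma sort_pm (R : realFieldType) (s : seq R) :
  all (fun x => (x == 1) || (x == -1)) s ->
  sort <=%R s = nseq (count_mem (-1) s) (-1) ++ nseq (count_mem 1 s) 1.
Proof.
move=> h; apply: le_sorted_eq; first by apply: sort_sorted => x y; exact: le_total.
  exact: sorted_pm.
by rewrite perm_sort; exact: perm_pm.
Qed.

Lemma sum_pm (R : realFieldType) q p :
  \sum_(x <- nseq q (-1 : R) ++ nseq p 1) x = p%:R - q%:R.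
Proof.
by rewrite big_cat !big_nseq !iter_addr_0 /= mulNrn addrC.
Qed.

Lemma drop_pm (T : Type) k q p (x y : T) :
  drop k (nseq q x ++ nseq p y) = nseq (q - k) x ++ nseq (p - (k - q)) y.
Proof.
rewrite drop_cat size_nseq; case: ltnP => h.
  have e : (k - q = 0)%N by lia.
  by rewrite drop_nseq e subn0.
have e : (q - k = 0)%N by lia.
by rewrite drop_nseq e.
Qed.

Lemma take_pm (T : Type) k q p (x y : T) :
  take k (nseq q x ++ nseq p y) = nseq (minn k q) x ++ nseq (minn (k - q) p) y.
Proof.
rewrite take_cat size_nseq; case: ltnP => h.
  rewrite take_nseq; last by lia.
  have e1 : minn k q = k by lia.
  have e2 : (k - q = 0)%N by lia.
  by rewrite e2 min0n cats0.
case: (leqP (k - q) p) => h2.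
  have e : minn (k - q) p = (k - q)%N by lia.
  by rewrite take_nseq // e.
have e : minn (k - q) p = p by lia.
by rewrite take_oversize ?size_nseq ?e //; lia.
Qed.

Lemma nth_pm (R : realFieldType) q p j :
  (j < q + p)%N -> nth 0 (nseq q (-1 : R) ++ nseq p 1) j = if (j < q)%N then -1 else 1.
Proof.
move=> h; rewrite nth_cat size_nseq; case: ltnP => h2; rewrite nth_nseq ?h2 //.
by case: ifP => //; lia.
Qed.

Lemma sg_diff (R : realFieldType) (p q : nat) :
  Num.sg (p%:R - q%:R : R) = if (q < p)%N then 1 else if (p < q)%N then -1 else 0.
Proof.
case: ltngtP => h.
- apply/gtr0_sg; rewrite subr_gt0 ltr_nat //.
- apply/ltr0_sg; rewrite subr_lt0 ltr_nat //.
- by rewrite h subrr sgr0.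
Qed.

Lemma cardc (R : realFieldType) (S : finType) (f : S -> R) (a : R) :
  #|[set m | f m == a]| = count_mem a [seq f m | m <- enum S].
Proof.
rewrite cardsE cardE count_map -size_filter /enum_mem -filter_predI.
apply: congr1; apply: eq_filter => x /=. by rewrite !inE /= andbT.
Qed.
Lemma sumc (R : realFieldType) (S : finType) (f : S -> R) :
  \sum_(m : S) f m = \sum_(x <- [seq f m | m <- enum S]) x.
Proof. by rewrite big_map big_enum. Qed.

Theorem theorem1 (R : realFieldType) (d : nat) (S : finType)
  (u : S -> 'I_d -> R) :
  (0 < d)%N -> (0 < #|S|)%N ->
  (forall m i, u m i = 1 \/ u m i = -1) ->
  forall i : 'I_d,
    Num.sg (agg_median u i) = Num.sg (agg_avg u i) /\
    Num.sg (agg_maj u i) = Num.sg (agg_avg u i) /\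
    (forall k : nat, (2 * k < #|S|)%N ->
       Num.sg (agg_trimmed k u i) = Num.sg (agg_avg u i)).
Proof.
move=> _ hS hpm i.
set s := coord_vals u i.
have hs : all (fun x => (x == 1) || (x == -1)) s.
  apply/allP => x /mapP [m _ ->]; case: (hpm m i) => ->; rewrite eqxx ?orbT //.
set q := count_mem (-1) s.
set p := count_mem 1 s.
have hsz : (q + p)%N = #|S|.
  rewrite -(size_nseq q (-1 : R)) -(size_nseq p (1 : R)) -size_cat.
  by rewrite -(perm_size (@perm_pm R s hs)) size_map -cardE.
have hsort : sorted_vals u i = nseq q (-1) ++ nseq p 1 by rewrite /sorted_vals sort_pm.
have hsg : forall x : R, x = (if (q < p)%N then 1 else if (p < q)%N then -1 else 0) ->
    Num.sg x = Num.sg (agg_avg u i).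
  move=> x ->; rewrite /agg_avg sumc -/(coord_vals u i) -/s.
  rewrite (perm_big _ (@perm_pm R s hs)) sum_pm sgrM sgrV.
  have -> : Num.sg (#|S|%:R : R) = 1 by apply: gtr0_sg; rewrite ltr0n.
  rewrite mul1r sg_diff.
  by case: ltngtP => _ //; rewrite ?sgr1 ?sgrN1 ?sgr0.

split; last split.
- apply: hsg; rewrite /agg_median hsort.
  have ho := odd_double_half #|S|.
  have hu := uphalf_half #|S|.
  rewrite -muln2 in ho.
  case: ifP => hodd.
    move/negbTE: hodd => hodd; rewrite hodd /= in ho.
    rewrite divn2 !nth_pm; try lia.
    repeat (case: ifP => ?); try (exfalso; lia); lra.
  move/negbFE: hodd => hodd; rewrite hodd /= in ho hu.
  rewrite nth_pm; try lia.
  case: ifP => h1; case: ifP => h2; try case: ifP => h3; try reflexivity; exfalso; move: ho hu hsz h1 h2; try move: h3; clear; move: (uphalf #|S|) (#|S|./2) #|S| => v h n; lia.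
- apply: hsg; rewrite /agg_maj !cardc -/(coord_vals u i) -/s -/p -/q.
  reflexivity.
- move=> k hk.
  have hav := hsg _ erefl.
  rewrite -hav /agg_trimmed hsort drop_pm take_pm size_cat !size_nseq.
  rewrite ifF; last by apply/negbTE; lia.
  rewrite sum_pm.
  have -> : forall b : bool, forall c : bool, Num.sg (if b then 1 else if c then -1 else 0 : R) = (if b then 1 else if c then -1 else 0).
    by move=> [] [] /=; rewrite ?sgr1 ?sgrN1 ?sgr0.
  rewrite sgrM sgrV gtr0_sg ?mul1r ?sg_diff; last by rewrite ltr0n; lia.
  move: hsz hk; move: (#|S|) => n; move=> hsz hk.
  repeat (case: ifP => ?); try reflexivity; exfalso; lia.
Qed.
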